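(* Let $T<\infty$ (so $\mathbb{T}=\{0,1,\dots,T\}$), and recall $G_t=\Delta$ on $D_t^c$. Define processes $(V_t)_{t\le T}$ (value process) and $(S_t)_{t\le T}$ (survival process) by backward recursion: $V_T=G_T$, $S_T=1_{D_T}$, and for $t=T-1,\dots,0$, \[ J_t=\frac{E[S_{t+1}V_{t+1}\mid\mathcal{F}_t]}{E[S_{t+1}\mid\mathcal{F}_t]}\quad\text{on } \{t<T_e\}, \] \[ \begin{cases} V_t=G_t,\ S_t=1 & \text{on } \{t<T_e\}\cap\{G_t\ge J_t\},\\ V_t=J_t,\ S_t=E[S_{t+1}\mid\mathcal{F}_t] & \text{on } \{t<T_e\}\cap\{G_t<J_t\},\\ V_t=G_t,\ S_t=1_{D_t} & \text{on } \{t\ge T_e\}. \end{cases} \] Then $\theta_t:=1_{\{G_t\ge V_t\}}$, $t\le T$, is the unique equilibrium with preference for early stopping.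
   Context: Let $T\in\mathbb{N}$ and $\mathbb{T}=\{0,1,\dots,T\}$. Let $(\Omega,\mathcal{F},P)$ be a probability space with a filtration $(\mathcal{F}_t)_{t\le T}$, $\mathcal{F}_0$ trivial. Let $\sigma$ be a stopping time with values in $\{0,1,2,\dots\}\cup\{\infty\}$ and $P(\sigma>0)=1$; set $D_t=\{t<\sigma\}$. Let $G=(G_t)_{t\le T}$ be an adapted payoff process; on $D_t^c$ one sets $G_t=\Delta$, an auxiliary symbol with the convention $0\cdot\Delta=0$. Standing assumption: $E[\sup_{t\le T}|G_t|1_{D_t}]<\infty$. For $s,t\in[0,\infty]$ write $s\lhd t$ iff $s<t$ or $t=\infty$. Convention: $\inf\emptyset=\infty$. The effective horizon is the random time $T_e=T\wedge\inf\{0\le t<T: P(D_{t+1}\mid\mathcal{F}_t)=0\}$. A stopping policy is a $\{0,1\}$-valued adapted process $\theta=(\theta_t)_{t\in\mathbb{T}}$, and $\mathcal{L}_t\theta=\inf\{s>t:\theta_s=1\}$. $\theta$ is admissible if $P(\mathcal{L}_t\theta\lhd\sigma\mid\mathcal{F}_t)>0$ on $\{t<T_e\}$ and $\theta_t=1$ on $\{t\ge T_e\}$. For admissible $\theta$, on $\{t<T_e\}$ the continuation value is $J_t(\theta)=E[G_{\mathcal{L}_t\theta}1_{\{\mathcal{L}_t\theta\lhd\sigma\}}\mid\mathcal{F}_t]/P(\mathcal{L}_t\theta\lhd\sigma\mid\mathcal{F}_t)$. Define $\Phi(\theta)_t=1$ on $\{t<T_e, G_t>J_t(\theta)\}$,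 $\Phi(\theta)_t=\theta_t$ on $\{t<T_e,G_t=J_t(\theta)\}$, $\Phi(\theta)_t=0$ on $\{t<T_e,G_t<J_t(\theta)\}$, $\Phi(\theta)_t=1$ on $\{t\ge T_e\}$. An equilibrium is an admissible $\theta$ with $\Phi(\theta)=\theta$; it is an equilibrium with preference for early stopping if in addition $\theta_t=1$ on $\{t<T_e, G_t=J_t(\theta)\}$ (i.e., $\theta_t=1$ exactly on $\{t\ge T_e\}\cup\{t<T_e,G_t\ge J_t(\theta)\}$). *)

(* Defs.v *)
From HB Require Import structures.
From mathcomp Require Import all_boot all_order all_algebra.
From mathcomp Require Import all_classical all_reals all_analysis.
Set Implicit Arguments.
Unset Strict Implicit.
Unset Printing Implicit Defensive.
Import Order.TTheory GRing.Theory Num.Theory.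
Local Open Scope classical_set_scope.
Local Open Scope ring_scope.

Section Defs.
Context (d : measure_display) (Omega : measurableType d) (R : realType).

Definition Fmeasurable (Fs : set (set Omega)) (f : Omega -> R) : Prop :=
  forall B : set R, measurable B -> Fs (f @^-1` B).

Definition cond_exp (P : probability Omega R) (Fs : set (set Omega))
    (X Y : Omega -> R) : Prop :=
  [/\ Fmeasurable Fs Y,
      P.-integrable setT (fun w => (Y w)%:E) &
      forall A, Fs A ->
        (\int[P]_(w in A) (Y w)%:E = \int[P]_(w in A) (X w)%:E)%E].

(** Times in {0,1,2,...} U {oo}: [Some n] = n, [None] = oo. *)
(** s <| t  iff  s < t or t = oo. *)
Definition lhd (s t : option nat) : bool :=
  match t with
  | None => true
  | Some t' => match s with Some s' => (s' < t')%N | None => false end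
  end.

(** D_t = {t < sigma} *)
Definition Dset (sigma : Omega -> option nat) (t : nat) (w : Omega) : bool :=
  lhd (Some t) (sigma w).

(** Effective horizon T_e = T /\ inf{0 <= t < T : pD t = 0}, where
    pD t is (a version of) P(D_{t+1} | F_t). *)
Definition Teff (T : nat) (pD : nat -> Omega -> R) (w : Omega) : nat :=
  find (fun t => pD t w == 0) (iota 0 T).

(** L_t theta = inf{s > t : theta_s = 1} (s ranging in {0..T}), None = oo. *)
Definition Lnext (T : nat) (theta : nat -> Omega -> bool) (t : nat)
    (w : Omega) : option nat :=
  let k := find (fun s => theta s w) (iota t.+1 (T - t)) in
  if (k < T - t)%N then Some (t.+1 + k)%N else None.

(** G evaluated at a random time; the value at oo is irrelevant
    (it is always multiplied by the indicator of L <| sigma, which is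
    then [false] unless sigma = oo, and never occurs for admissible policies). *)
Definition Gat (G : nat -> Omega -> R) (L : option nat) (w : Omega) : R :=
  match L with Some s => G s w | None => 0 end.

Definition standing (P : probability Omega R) (T : nat)
    (F : nat -> set (set Omega)) (sigma : Omega -> option nat)
    (G : nat -> Omega -> R) : Prop :=
  (forall t, (t <= T)%N -> sigma_algebra setT (F t) /\ F t `<=` measurable) /\
      (forall s t, (s <= t <= T)%N -> F s `<=` F t) /\
      (forall A, F 0%N A -> A = set0 \/ A = setT) /\
      ((forall t, measurable [set w | sigma w = Some t]) /\
      (forall t, (t <= T)%N -> F t [set w | sigma w = Some t])) /\
      P [set w | sigma w != Some 0%N] = 1%E /\
      (forall t, (t <= T)%N -> Fmeasurable (F t) (G t)) /\
      P.-integrable setT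
        (fun w => (\big[Num.max/0]_(t < T.+1)
                     (`|G t w| * (Dset sigma t w)%:R))%:E).

Definition admissible (P : probability Omega R) (T : nat)
    (F : nat -> set (set Omega)) (sigma : Omega -> option nat)
    (Te : Omega -> nat) (theta : nat -> Omega -> bool) : Prop :=
  (forall t, (t <= T)%N -> F t [set w | theta t w]) /\
  (forall t, (t <= T)%N ->
     (forall q, cond_exp P (F t)
                  (fun w => (lhd (Lnext T theta t w) (sigma w))%:R) q ->
        {ae P, forall w, (t < Te w)%N -> 0 < q w}) /\
     {ae P, forall w, (Te w <= t)%N -> theta t w}).

(** Equilibrium with preference for early stopping: admissible, and on
    {t < T_e}, theta_t = 1 iff G_t >= J_t(theta), where
    J_t(theta) = E[G_{L_t theta} 1_{L_t theta <| sigma} | F_t]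
                 / P(L_t theta <| sigma | F_t). *)
Definition equilibrium_pes (P : probability Omega R) (T : nat)
    (F : nat -> set (set Omega)) (sigma : Omega -> option nat)
    (G : nat -> Omega -> R) (Te : Omega -> nat)
    (theta : nat -> Omega -> bool) : Prop :=
  admissible P T F sigma Te theta /\
  forall t, (t <= T)%N -> forall num den,
    cond_exp P (F t)
      (fun w => Gat G (Lnext T theta t w) w *
                (lhd (Lnext T theta t w) (sigma w))%:R) num ->
    cond_exp P (F t)
      (fun w => (lhd (Lnext T theta t w) (sigma w))%:R) den ->
    {ae P, forall w, (t < Te w)%N ->
       theta t w = (num w / den w <= G t w)}.

End Defs.

(* Main.v *)
Require Import Defs.
From HB Require Import structures.
From mathcomp Require Import all_boot all_order all_algebra.
From mathcomp Require Import all_classical all_reals all_analysis.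
From mathcomp Require Import measurable_realfun zify.
Import Order.TTheory GRing.Theory Num.Theory.
Local Open Scope classical_set_scope.
Local Open Scope ring_scope.
Set Implicit Arguments.
Unset Strict Implicit.
Unset Printing Implicit Defensive.


Section aeL.
Context d (Omega : measurableType d) (R : realType) (P : probability Omega R).

Lemma aeS (Q1 Q2 : Omega -> Prop) : (forall w, Q1 w -> Q2 w) ->
  {ae P, forall w, Q1 w} -> {ae P, forall w, Q2 w}.
Proof. by move=> h; apply: filterS. Qed.

Lemma aeS2 (Q1 Q2 Q3 : Omega -> Prop) : (forall w, Q1 w -> Q2 w -> Q3 w) ->
  {ae P, forall w, Q1 w} -> {ae P, forall w, Q2 w} -> {ae P, forall w, Q3 w}.
Proof. by move=> h; apply: filterS2. Qed.

Lemma aeT (Q : Omega -> Prop) : (forall w, Q w) -> {ae P, forall w, Q w}.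
Proof. by move=> h; apply: aeW. Qed.

Lemma ae_null (Q : Omega -> Prop) : {ae P, forall w, Q w} ->
  exists N, [/\ measurable N, P N = 0%E & forall w, ~ Q w -> N w].
Proof.
by move=> [N [mN PN sN]]; exists N; split => // w nQ; apply: sN.
Qed.

Lemma null_ae (Q : Omega -> Prop) N : measurable N -> P N = 0%E ->
  (forall w, ~ N w -> Q w) -> {ae P, forall w, Q w}.
Proof.
move=> mN PN h; exists N; split => // w /= nQ.
by apply: contrapT => nN; apply: nQ; apply: h.
Qed.

Lemma ae_set0 (C : set Omega) : measurable C -> {ae P, forall w, ~ C w} ->
  P C = 0%E.
Proof.
move=> mC /ae_null [N [mN PN sN]].
apply/eqP; rewrite -measure_le0 -PN; apply: le_measure; rewrite ?inE //.
by move=> w Cw; apply: sN.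
Qed.

Lemma aeS3 (Q1 Q2 Q3 Q4 : Omega -> Prop) :
  (forall w, Q1 w -> Q2 w -> Q3 w -> Q4 w) ->
  {ae P, forall w, Q1 w} -> {ae P, forall w, Q2 w} -> {ae P, forall w, Q3 w} ->
  {ae P, forall w, Q4 w}.
Proof.
move=> h h1 h2 h3; apply: (aeS2 _ h1 (aeS2 (fun w a b => conj a b) h2 h3)).
by move=> w a [b c]; exact: h.
Qed.

End aeL.


Section intL.
Context d (Omega : measurableType d) (R : realType) (P : probability Omega R).

Lemma KPae (C : set Omega) (h : Omega -> R) : measurable C -> measurable_fun C h ->
  {ae P, forall w, C w -> 0 < h w} -> (\int[P]_(w in C) (h w)%:E = 0)%E ->
  P C = 0%E.
Proof.
move=> mC mh hpos h0.
have mhe : measurable_fun C (EFin \o h) by apply/measurable_EFinP.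
have e1 : (\int[P]_(w in C) `|(h w)%:E| = \int[P]_(w in C) (h w)%:E)%E.
  apply: ae_eq_integral => //; first exact: measurableT_comp.
  by apply: aeS hpos => w hw Cw; rewrite gee0_abs // lee_fin ltW // (hw Cw).
have := (ae_eq_integral_abs P mC mhe).1; rewrite e1 => /(_ h0) H.
apply: ae_set0 => //; apply: aeS2 hpos H => w h1 h2 Cw.
by have := h2 Cw; move=> [] e; have := h1 Cw; rewrite e ltxx.
Qed.

Lemma KPae2 (C : set Omega) (f g : Omega -> R) : measurable C ->
  P.-integrable C (fun w => (f w)%:E) -> P.-integrable C (fun w => (g w)%:E) ->
  {ae P, forall w, C w -> f w < g w} ->
  (\int[P]_(w in C) (f w)%:E = \int[P]_(w in C) (g w)%:E)%E ->
  P C = 0%E.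
Proof.
move=> mC fi gi hlt he.
apply: (@KPae C (fun w => g w - f w)) => //.
- apply: measurable_funB.
  + by have /measurable_int/measurable_EFinP := gi.
  + by have /measurable_int/measurable_EFinP := fi.
- by apply: aeS hlt => w h Cw; rewrite subr_gt0 h.
- under eq_integral do rewrite EFinB.
  by rewrite integralB_EFin // he subee // integrable_fin_num.
Qed.

Lemma ABS (C : set Omega) (f : Omega -> R) : measurable C -> measurable_fun C f ->
  {ae P, forall w, C w -> 0 <= f w} ->
  (\int[P]_(w in C) `|(f w)%:E| = \int[P]_(w in C) (f w)%:E)%E.
Proof.
move=> mC mf hpos.
have mfe : measurable_fun C (EFin \o f) by apply/measurable_EFinP.
apply: ae_eq_integral => //; first exact: measurableT_comp.
by apply: aeS hpos => w hw Cw; rewrite gee0_abs // lee_fin (hw Cw).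
Qed.

Lemma AEge0 (C : set Omega) (f : Omega -> R) : measurable C -> measurable_fun C f ->
  {ae P, forall w, C w -> 0 <= f w} ->
  (0 <= \int[P]_(w in C) (f w)%:E)%E.
Proof. by move=> mC mf hpos; rewrite -ABS // integral_ge0. Qed.

Lemma Z0 (C : set Omega) (f : Omega -> R) : measurable C -> measurable_fun C f ->
  {ae P, forall w, C w -> 0 <= f w} ->
  (\int[P]_(w in C) (f w)%:E <= 0)%E ->
  {ae P, forall w, C w -> f w = 0}.
Proof.
move=> mC mf hpos hle.
have mfe : measurable_fun C (EFin \o f) by apply/measurable_EFinP.
have e : (\int[P]_(w in C) `|(f w)%:E| = 0)%E.
  apply/eqP; rewrite eq_le; rewrite ABS // hle /=.
  by rewrite -ABS // integral_ge0.
have := (ae_eq_integral_abs P mC mfe).1 e.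
by apply: aeS => w h Cw; have := h Cw; move=> [].
Qed.

Lemma KPneg (C : set Omega) (h : Omega -> R) : measurable C -> measurable_fun C h ->
  (forall w, C w -> h w < 0) -> (0 <= \int[P]_(w in C) (h w)%:E)%E ->
  P C = 0%E.
Proof.
move=> mC mh hneg hge.
apply: (@KPae C (fun w => - h w)) => //.
- exact: measurable_funN.
- by apply: aeT => w Cw; rewrite oppr_gt0 hneg.
- have h0 : forall x, C x -> (0 <= (- h x)%:E)%E.
    by move=> x Cx; rewrite lee_fin oppr_ge0 ltW // hneg.
  have := @integral_ge0N _ _ _ P _ _ h0.
  under eq_integral do rewrite -EFinN opprK.
  move=> e; apply/eqP; rewrite eq_le integral_ge0 // andbT.
  by rewrite -leeN2 oppe0 -e.
Qed.

Lemma LE0 (C : set Omega) (f : Omega -> R) :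
  (forall w, C w -> f w <= 0) -> (\int[P]_(w in C) (f w)%:E <= 0)%E.
Proof.
move=> hf.
have h0 : forall x, C x -> (0 <= (- f x)%:E)%E.
  by move=> x Cx; rewrite lee_fin oppr_ge0 hf.
have := @integral_ge0N _ _ _ P _ _ h0.
under eq_integral do rewrite -EFinN opprK.
by move=> ->; rewrite leeNl oppe0 integral_ge0.
Qed.

Lemma SPLIT (C E : set Omega) (f g : Omega -> R) : measurable C -> measurable E ->
  measurable_fun setT f -> measurable_fun setT g ->
  (\int[P]_(w in C `&` E) (f w)%:E = \int[P]_(w in C `&` E) (g w)%:E)%E ->
  (\int[P]_(w in C `&` ~` E) (f w)%:E = \int[P]_(w in C `&` ~` E) (g w)%:E)%E ->
  (\int[P]_(w in C) (f w)%:E = \int[P]_(w in C) (g w)%:E)%E.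
Proof.
move=> mC mE mf mg h1 h2.
have hC : C = (C `&` E) `|` (C `&` ~` E) by rewrite -setIUr setUCr setIT.
have m1 : measurable (C `&` E) by exact: measurableI.
have m2 : measurable (C `&` ~` E) by apply: measurableI => //; exact: measurableC.
have dj : [disjoint C `&` E & C `&` ~` E].
  by rewrite /disj_set setIACA setICr setI0.
have mfe : measurable_fun setT (EFin \o f) by apply/measurable_EFinP.
have mge : measurable_fun setT (EFin \o g) by apply/measurable_EFinP.
rewrite hC (integral_setU _ m1 m2) //; last exact: measurable_funTS.
by rewrite (integral_setU _ m1 m2) ?h1 ?h2 //; exact: measurable_funTS.
Qed.

End intL.


Section subL.
Context d (Omega : measurableType d) (R : realType) (P : probability Omega R).
Variable Fs : set (set Omega).
Hypothesis HFs : sigma_algebra setT Fs.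
Hypothesis HFm : Fs `<=` measurable.
Local Notation FT := (g_sigma_algebraType Fs).

Lemma FT_meas : (measurable : set (set FT)) = Fs.
Proof. exact: measurable_g_measurableTypeE. Qed.

Lemma mid : measurable_fun [set: Omega] (id : Omega -> FT).
Proof.
move=> _ B mB; rewrite setTI preimage_id.
exact: (smallest_sub (@sigma_algebra_measurable _ Omega) HFm mB).
Qed.

Lemma Fm_of (f : Omega -> R) : Fmeasurable Fs f -> measurable_fun [set: FT] f.
Proof. by move=> hf _ B mB; rewrite setTI FT_meas; exact: hf. Qed.

Lemma Fm_to (f : Omega -> R) : measurable_fun [set: FT] f -> Fmeasurable Fs f.
Proof.
by move=> hf B mB; have := hf measurableT B mB; rewrite setTI FT_meas.
Qed.

Lemma FT_Omega d' (U : measurableType d') (f : Omega -> U) :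
  measurable_fun [set: FT] f -> measurable_fun [set: Omega] f.
Proof. by move=> mf; exact: (measurableT_comp mf mid). Qed.

Lemma Fset (b : Omega -> bool) : measurable_fun [set: FT] b -> Fs [set w | b w].
Proof.
by move=> mb; have := mb measurableT [set true] I; rewrite setTI FT_meas.
Qed.

Lemma Fbool (b : Omega -> bool) : Fs [set w | b w] -> measurable_fun [set: FT] b.
Proof.
by move=> hb; apply: (measurable_fun_bool true); rewrite setTI FT_meas.
Qed.

Lemma ce_unique (Y1 Y2 : Omega -> R) : Fmeasurable Fs Y1 -> Fmeasurable Fs Y2 ->
  P.-integrable setT (fun w => (Y1 w)%:E) ->
  P.-integrable setT (fun w => (Y2 w)%:E) ->
  (forall C, Fs C ->
     (\int[P]_(w in C) (Y1 w)%:E = \int[P]_(w in C) (Y2 w)%:E)%E) ->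
  {ae P, forall w, Y1 w = Y2 w}.
Proof.
move=> m1 m2 i1 i2 hC.
have m1' := Fm_of m1; have m2' := Fm_of m2.
have me1 : measurable_fun [set: FT] (EFin \o Y1) by apply/measurable_EFinP.
have me2 : measurable_fun [set: FT] (EFin \o Y2) by apply/measurable_EFinP.
have H := @integral_ae_eq _ FT R (pushforward P (id : Omega -> FT)) setT
  measurableT (EFin \o Y2) (EFin \o Y1).
have iS (Y : Omega -> R) (E : set FT) : measurable E ->
    P.-integrable setT (fun w => (Y w)%:E) ->
    P.-integrable ((id : Omega -> FT) @^-1` E) ((EFin \o Y) \o id).
  move=> mE iY; apply: (integrableS measurableT) => //.
  by rewrite preimage_id; apply: HFm; rewrite -FT_meas.
have ip : (pushforward P (id : Omega -> FT)).-integrable setT (EFin \o Y1).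
  by apply: (integrable_pushforward mid) => //; exact: iS.
have intE (Y : Omega -> R) (E : set FT) : measurable E ->
    P.-integrable setT (fun w => (Y w)%:E) ->
    measurable_fun [set: FT] (EFin \o Y) ->
    (\int[pushforward P (id : Omega -> FT)]_(x in E) (EFin \o Y) x =
     \int[P]_(x in E) (Y x)%:E)%E.
  by move=> mE iY mY; rewrite (integral_pushforward mid) //; exact: iS.
have hint : (forall E : set FT, E `<=` setT -> measurable E ->
   (\int[pushforward P (id : Omega -> FT)]_(x in E) (EFin \o Y1) x =
   \int[pushforward P (id : Omega -> FT)]_(x in E) (EFin \o Y2) x)%E).
  move=> E _ mE; rewrite !intE //; apply: hC; by rewrite -FT_meas.
have [N [mN N0 sN]] := H mid ip me2 hint.
apply: (@null_ae d Omega R P (fun w => Y1 w = Y2 w) N).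
- by apply: HFm; rewrite -FT_meas.
- exact: N0.
- move=> w Nw; apply: contrapT => hne; apply: Nw; apply: sN => /= h.
  by apply: hne; have := h I; move=> [].
Qed.
End subL.


Section comb.
Context d (Omega : measurableType d) (R : realType).
Implicit Types (th : nat -> Omega -> bool) (w : Omega).

Lemma Lnext_ge T th t w : (T <= t)%N -> Lnext T th t w = None.
Proof.
by move=> h; rewrite /Lnext; have -> : (T - t = 0)%N by apply/eqP; rewrite subn_eq0.
Qed.

Lemma Lnext_rec T th t w : (t < T)%N ->
  Lnext T th t w = if th t.+1 w then Some t.+1 else Lnext T th t.+1 w.
Proof.
move=> tT; rewrite /Lnext; have -> : (T - t = (T - t.+1).+1)%N by rewrite subnSK.
rewrite /=; case: (th t.+1 w) => /=; first by congr Some; lia.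
case: ifP => h1; case: ifP => h2 //; [by congr Some; lia| lia | lia].
Qed.

Lemma eq_Lnext T th1 th2 t w :
  (forall u, (t < u <= T)%N -> th1 u w = th2 u w) ->
  Lnext T th1 t w = Lnext T th2 t w.
Proof.
rewrite /Lnext => h; rewrite (@eq_in_find _ _ (fun s => th2 s w)) // => u.
by rewrite mem_iota => /andP[h1 h2]; apply: h; apply/andP; split; lia.
Qed.

Variable pD : nat -> Omega -> R.

Lemma Teff_le T w : (Teff T pD w <= T)%N.
Proof. by rewrite /Teff; have := find_size (fun t => pD t w == 0) (iota 0 T); rewrite size_iota. Qed.

Lemma Teff_lt T t w : (t < Teff T pD w)%N =
  (t < T)%N && all (fun s => pD s w != 0) (iota 0 t.+1).
Proof.
apply/idP/idP.
- move=> h; have tT : (t < T)%N := leq_trans h (Teff_le T w).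
  rewrite tT andTb; apply/allP => s; rewrite mem_iota add0n ltnS => /andP[_ st].
  have := @before_find _ 0%N (fun t => pD t w == 0) (iota 0 T) s.
  rewrite nth_iota; last by lia.
  by rewrite add0n => /(_ (leq_ltn_trans st h)) ->.
- case/andP => tT /allP hall; rewrite ltnNge; apply/negP => hle.
  have hf : (Teff T pD w < size (iota 0 T))%N by rewrite size_iota; lia.
  have := @nth_find _ 0%N (fun t => pD t w == 0) (iota 0 T).
  rewrite has_find => /(_ hf); rewrite nth_iota; last by rewrite size_iota in hf.
  rewrite add0n => /eqP h0.
  have := hall (Teff T pD w); rewrite mem_iota /= h0 eqxx => H.
  suff /H : (Teff T pD w < 0 + t.+1)%N by []. lia.
Qed.

Lemma Teff_pD T t w : (t < Teff T pD w)%N -> pD t w != 0.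
Proof.
rewrite Teff_lt => /andP[_ /allP]; apply; rewrite mem_iota; lia.
Qed.

Lemma DsetS (sigma : Omega -> option nat) t w :
  Dset sigma t.+1 w -> Dset sigma t w.
Proof. by rewrite /Dset /lhd; case: (sigma w) => // n; apply: ltnW. Qed.

Lemma DsetE (sigma : Omega -> option nat) t w :
  Dset sigma t w = all (fun u => sigma w != Some u) (iota 0 t.+1).
Proof.
rewrite /Dset /lhd; case: (sigma w) => [n|]; last by apply/esym/allP.
apply/idP/allP.
- by move=> tn u; rewrite mem_iota => /andP[_ h]; apply/eqP => -[e]; lia.
- move=> h; rewrite ltnNge; apply/negP => nt.
  have := h n; rewrite mem_iota eqxx /= => H.
  suff /H : (n < 0 + t.+1)%N by []. lia.
Qed.

End comb.


Section gen.
Context d' (X : measurableType d') (R : realType).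

Lemma mR_of_bool (b : X -> bool) : measurable_fun setT b ->
  measurable_fun setT (fun x => (b x)%:R : R).
Proof.
move=> mb; rewrite (_ : (fun x => _) = (fun x => if b x then 1 else 0)).
  exact: measurable_fun_ifT.
by apply/funext => x; case: (b x).
Qed.

Lemma measurable_all (s : seq nat) (p : nat -> X -> bool) :
  (forall u, u \in s -> measurable_fun setT (p u)) ->
  measurable_fun setT (fun x => all (fun u => p u x) s).
Proof.
elim: s => [|a s IH] h /=; first exact: measurable_cst.
apply: measurable_and; first by apply: h; rewrite inE eqxx.
by apply: IH => u us; apply: h; rewrite inE us orbT.
Qed.

Lemma le_div_bool (a b g : R) : (a / b <= g) =
  if 0 < b then a <= g * b else if b < 0 then g * b <= a else 0 <= g.
Proof.
case: (ltgtP 0 b) => hb.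
- by rewrite ler_pdivrMr.
- by rewrite ler_ndivrMr.
- by rewrite -hb invr0 mulr0.
Qed.

Lemma mdiv_le (f1 f2 f3 : X -> R) : measurable_fun setT f1 ->
  measurable_fun setT f2 -> measurable_fun setT f3 ->
  measurable_fun setT (fun x => f1 x / f2 x <= f3 x).
Proof.
move=> m1 m2 m3; under eq_fun do rewrite le_div_bool.
apply: measurable_fun_ifT; first exact: measurable_fun_ltr.
  by apply: measurable_fun_ler => //; exact: measurable_funM.
apply: measurable_fun_ifT; first exact: measurable_fun_ltr.
  by apply: measurable_fun_ler => //; exact: measurable_funM.
exact: measurable_fun_ler.
Qed.

End gen.


Definition thetaV d (Omega : measurableType d) (R : realType)
  (V G : nat -> Omega -> R) t w := V t w <= G t w.

Section main.
Context d (Omega : measurableType d) (R : realType) (P : probability Omega R)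
  (T : nat) (F : nat -> set (set Omega)) (sigma : Omega -> option nat)
  (G : nat -> Omega -> R) (pD A B V S : nat -> Omega -> R).
Hypothesis Hst : standing P T F sigma G.
Hypothesis HpD : forall t, (t < T)%N ->
     cond_exp P (F t) (fun w => (Dset sigma t.+1 w)%:R) (pD t).
Hypothesis HA : forall t, (t < T)%N ->
     cond_exp P (F t) (fun w => S t.+1 w * V t.+1 w) (A t).
Hypothesis HB : forall t, (t < T)%N -> cond_exp P (F t) (S t.+1) (B t).
Hypothesis HVT : forall w, V T w = G T w /\ S T w = (Dset sigma T w)%:R.
Hypothesis Hrec : forall t w, (t < T)%N ->
     if (t < Teff T pD w)%N then
       (if A t w / B t w <= G t w
        then V t w = G t w /\ S t w = 1
        else V t w = A t w / B t w /\ S t w = B t w)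
     else V t w = G t w /\ S t w = (Dset sigma t w)%:R.

Local Notation FT t := (g_sigma_algebraType (F t)).
Local Notation Te := (Teff T pD).
Local Notation theta := (thetaV V G).

Lemma HF t : (t <= T)%N -> sigma_algebra setT (F t).
Proof. by case: Hst => h _ tT; case: (h t tT). Qed.

Lemma HFm t : (t <= T)%N -> F t `<=` measurable.
Proof. by case: Hst => h _ tT; case: (h t tT). Qed.

Lemma Hmono s t : (s <= t <= T)%N -> F s `<=` F t.
Proof. by case: Hst => _ [h _]; apply: h. Qed.

Lemma Fmono d2 (U : measurableType d2) s t (f : Omega -> U) : (s <= t)%N -> (t <= T)%N ->
  measurable_fun [set: FT s] f -> measurable_fun [set: FT t] f.
Proof.
move=> st tT mf _ Y mY; have := mf measurableT Y mY; rewrite !setTI.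
rewrite (FT_meas (HF (leq_trans st tT))) (FT_meas (HF tT)).
by apply: Hmono; rewrite st tT.
Qed.

Lemma toOmega d2 (U : measurableType d2) t (f : Omega -> U) : (t <= T)%N ->
  measurable_fun [set: FT t] f -> measurable_fun [set: Omega] f.
Proof. by move=> tT; apply: FT_Omega; apply: HFm. Qed.

Lemma mG t : (t <= T)%N -> measurable_fun [set: FT t] (G t).
Proof.
move=> tT; apply: (Fm_of (HF tT)).
by case: Hst => _ [_ [_ [_ [_ [h _]]]]]; apply: h.
Qed.

Lemma mpD s t : (s <= t)%N -> (t <= T)%N -> (s < T)%N ->
  measurable_fun [set: FT t] (pD s).
Proof.
move=> st tT sT; apply: (Fmono st tT); apply: (Fm_of (HF (ltnW sT))).
by case: (HpD sT).
Qed.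

Lemma mA t : (t < T)%N -> measurable_fun [set: FT t] (A t).
Proof. by move=> tT; apply: (Fm_of (HF (ltnW tT))); case: (HA tT). Qed.

Lemma mB t : (t < T)%N -> measurable_fun [set: FT t] (B t).
Proof. by move=> tT; apply: (Fm_of (HF (ltnW tT))); case: (HB tT). Qed.

Lemma msig u t : (u <= t)%N -> (t <= T)%N ->
  measurable_fun [set: FT t] (fun w => sigma w != Some u).
Proof.
move=> ut tT; apply: measurable_neg; apply: (Fbool (HF tT)).
have -> : [set w | sigma w == Some u] = [set w | sigma w = Some u].
  by apply/seteqP; split => w /= /eqP.
apply: (@Hmono u); first by rewrite ut tT.
by case: Hst => _ [_ [_ [[_ h] _]]]; apply: h; apply: (leq_trans ut).
Qed.

Lemma mDset t : (t <= T)%N -> measurable_fun [set: FT t] (Dset sigma t).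
Proof.
move=> tT; rewrite (_ : Dset sigma t = fun w => all (fun u => sigma w != Some u) (iota 0 t.+1)).
  apply: measurable_all => u; rewrite mem_iota => /andP[_ ut].
  by apply: msig => //; lia.
by apply/funext => w; rewrite DsetE.
Qed.

Lemma mTe t : (t < T)%N -> measurable_fun [set: FT t] (fun w => (t < Te w)%N).
Proof.
move=> tT; under eq_fun do rewrite Teff_lt tT andTb.
apply: measurable_all => s; rewrite mem_iota => /andP[_ st].
apply: measurable_neg; apply: measurable_fun_eqr => //.
by apply: mpD => //; lia.
Qed.

Lemma thetaE t w : (t < T)%N ->
  theta t w = if (t < Te w)%N then A t w / B t w <= G t w else true.
Proof.
move=> tT; rewrite /thetaV; have := Hrec w tT; case: ifP => _.
  by case: ifP => h [-> _]; rewrite ?lexx ?h.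
by move=> [-> _]; rewrite lexx.
Qed.

Lemma thetaT w : theta T w.
Proof. by rewrite /thetaV (HVT w).1 lexx. Qed.

Lemma YE t w : (t < T)%N -> S t w * V t w =
  if (t < Te w)%N then (if A t w / B t w <= G t w then G t w
                        else if B t w == 0 then 0 else A t w)
  else (Dset sigma t w)%:R * G t w.
Proof.
move=> tT; have := Hrec w tT; case: ifP => _.
  case: ifP => h [-> ->]; first by rewrite mul1r.
  case: eqP => [->|/eqP nz]; first by rewrite mul0r.
  by rewrite mulrC divfK.
by move=> [-> ->].
Qed.

Lemma SE t w : (t < T)%N -> S t w =
  if (t < Te w)%N then (if A t w / B t w <= G t w then 1 else B t w)
  else (Dset sigma t w)%:R.
Proof.
move=> tT; have := Hrec w tT; case: ifP => _.
  by case: ifP => h [_ ->].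
by move=> [_ ->].
Qed.

Lemma mtheta t : (t <= T)%N -> measurable_fun [set: FT t] (theta t).
Proof.
rewrite leq_eqVlt => /orP[/eqP ->|tT].
  rewrite (_ : theta T = fun _ => true) //.
  by apply/funext => w; rewrite thetaT.
rewrite (_ : theta t = fun w =>
   if (t < Te w)%N then A t w / B t w <= G t w else true); last first.
  by apply/funext => w; rewrite thetaE.
apply: measurable_fun_ifT => //; first exact: mTe.
by apply: mdiv_le; [exact: mA|exact: mB|apply: mG; exact: ltnW].
Qed.

Lemma mYO t : (t <= T)%N ->
  measurable_fun [set: Omega] (fun w => S t w * V t w).
Proof.
move=> tT; apply: (toOmega tT).
move: tT; rewrite leq_eqVlt => /orP[/eqP ->|tT].
  rewrite (_ : (fun w => _) = fun w => (Dset sigma T w)%:R * G T w).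
    by apply: measurable_funM; [apply: mR_of_bool; exact: mDset|exact: mG].
  by apply/funext => w; rewrite (HVT w).1 (HVT w).2.
under eq_fun do rewrite YE //.
have tT' := ltnW tT.
apply: measurable_fun_ifT => //; first exact: mTe.
  apply: measurable_fun_ifT => //; first by apply: mdiv_le; [exact: mA|exact: mB|exact: mG].
    exact: mG.
  apply: measurable_fun_ifT => //; last exact: mA.
  by apply: measurable_fun_eqr => //; exact: mB.
by apply: measurable_funM; [apply: mR_of_bool; exact: mDset|exact: mG].
Qed.

Lemma mSO t : (t <= T)%N -> measurable_fun [set: Omega] (S t).
Proof.
move=> tT; apply: (toOmega tT).
move: tT; rewrite leq_eqVlt => /orP[/eqP ->|tT].
  rewrite (_ : S T = fun w => (Dset sigma T w)%:R).
    by apply: mR_of_bool; exact: mDset.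
  by apply/funext => w; rewrite (HVT w).2.
rewrite (_ : S t = fun w =>
  if (t < Te w)%N then (if A t w / B t w <= G t w then 1 else B t w)
  else (Dset sigma t w)%:R); last by apply/funext => w; rewrite SE.
have tT' := ltnW tT.
apply: measurable_fun_ifT => //; first exact: mTe.
  apply: measurable_fun_ifT => //; first by apply: mdiv_le; [exact: mA|exact: mB|exact: mG].
  exact: mB.
by apply: mR_of_bool; exact: mDset.
Qed.

Definition Xg (th : nat -> Omega -> bool) t w :=
  Gat G (Lnext T th t w) w * (lhd (Lnext T th t w) (sigma w))%:R.
Definition Xi (th : nat -> Omega -> bool) t w : R :=
  (lhd (Lnext T th t w) (sigma w))%:R.

Lemma Xg_rec th t w : (t < T)%N -> Xg th t w =
  if th t.+1 w then G t.+1 w * (Dset sigma t.+1 w)%:R else Xg th t.+1 w.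
Proof. by move=> tT; rewrite /Xg Lnext_rec //; case: (th t.+1 w). Qed.

Lemma Xi_rec th t w : (t < T)%N -> Xi th t w =
  if th t.+1 w then (Dset sigma t.+1 w)%:R else Xi th t.+1 w.
Proof. by move=> tT; rewrite /Xi Lnext_rec //; case: (th t.+1 w). Qed.

Lemma Xg_T th w : Xg th T w = 0.
Proof. by rewrite /Xg Lnext_ge //= mul0r. Qed.

Lemma Xi_T th w : Xi th T w = (lhd None (sigma w))%:R.
Proof. by rewrite /Xi Lnext_ge. Qed.

Lemma msigNone : measurable_fun [set: Omega] (fun w => lhd None (sigma w)).
Proof.
apply: (measurable_fun_bool true); rewrite setTI.
have -> : (fun w => lhd None (sigma w)) @^-1` [set true] =
    ~` \bigcup_n [set w | sigma w = Some n].
  apply/seteqP; split => w; rewrite /preimage /=.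
  - by case E: (sigma w) => [n|] //= _ [m _ /=]; rewrite E.
  - case E: (sigma w) => [n|] //= h; exfalso; apply: h.
    by exists n.
apply: measurableC; apply: bigcupT_measurable => n.
by case: Hst => _ [_ [_ [[h _] _]]]; apply: h.
Qed.

Lemma mX (th : nat -> Omega -> bool) :
  (forall u, (u <= T)%N -> measurable_fun [set: Omega] (th u)) ->
  forall t, (t <= T)%N ->
  measurable_fun [set: Omega] (Xg th t) /\ measurable_fun [set: Omega] (Xi th t).
Proof.
move=> mth t tT; move: {2}(T - t)%N (erefl (T - t)%N) => n.
elim: n t tT => [|n IH] t tT hn.
  have -> : t = T by lia.
  split.
    by rewrite (_ : Xg th T = fun _ => 0) //; apply/funext => w; rewrite Xg_T.
  rewrite (_ : Xi th T = fun w => (lhd None (sigma w))%:R).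
    exact: (mR_of_bool msigNone).
  by apply/funext => w; rewrite Xi_T.
have tT' : (t < T)%N by lia.
have [IH1 IH2] := IH t.+1 tT' ltac:(lia).
have mG1 := toOmega tT' (mG tT').
have mD1 := mR_of_bool (toOmega tT' (mDset tT')).
split.
  rewrite (_ : Xg th t = fun w => if th t.+1 w then G t.+1 w * (Dset sigma t.+1 w)%:R else Xg th t.+1 w).
    apply: measurable_fun_ifT => //; first exact: (mth _ tT').
    exact: measurable_funM.
  by apply/funext => w; rewrite Xg_rec.
rewrite (_ : Xi th t = fun w => if th t.+1 w then (Dset sigma t.+1 w)%:R else Xi th t.+1 w).
  by apply: measurable_fun_ifT; [exact: (mth _ tT')|exact: mD1|exact: IH2].
by apply/funext => w; rewrite Xi_rec.
Qed.

Lemma Fmeas t C : (t <= T)%N -> F t C -> measurable C.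
Proof. by move=> tT; apply: HFm. Qed.

Lemma FsetI t (C E : set Omega) : (t <= T)%N -> F t C -> F t E -> F t (C `&` E).
Proof.
move=> tT hC hE; rewrite -(FT_meas (HF tT)); apply: measurableI;
  by rewrite (FT_meas (HF tT)).
Qed.

Lemma FsetIC t (C E : set Omega) : (t <= T)%N -> F t C -> F t E -> F t (C `&` ~` E).
Proof.
move=> tT hC hE; rewrite -(FT_meas (HF tT)); apply: measurableI.
  by rewrite (FT_meas (HF tT)).
by apply: measurableC; rewrite (FT_meas (HF tT)).
Qed.

Lemma mpDO t : (t < T)%N -> measurable_fun [set: Omega] (pD t).
Proof. by move=> tT; apply: (toOmega (ltnW tT)); exact: (mpD (leqnn t) (ltnW tT) tT). Qed.

Lemma mDO t : (t <= T)%N -> measurable_fun [set: Omega] (fun w => (Dset sigma t w)%:R : R).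
Proof. by move=> tT; apply: mR_of_bool; apply: (toOmega tT); apply: mDset. Qed.

Lemma P0 t : (t < T)%N -> {ae P, forall w, 0 <= pD t w}.
Proof.
move=> tT; have tT' := ltnW tT.
have FC : F t [set w | pD t w < 0].
  by apply: (Fset (HF tT')); apply: measurable_fun_ltr => //; exact: mpD.
have mC := Fmeas tT' FC.
have PC : P [set w | pD t w < 0] = 0%E.
  apply: KPneg => //; [exact: measurable_funTS (mpDO tT)|by []|].
  case: (HpD tT) => _ _ ->//; apply: integral_ge0 => w _.
  by rewrite lee_fin ler0n.
apply: (null_ae mC PC) => w /= h; rewrite leNgt; apply/negP => h'; exact: h.
Qed.

Lemma P1 t : (t < T)%N -> {ae P, forall w, pD t w != 0 -> Dset sigma t w}.
Proof.
move=> tT; have tT' := ltnW tT.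
pose C := [set w | ~~ Dset sigma t w && (0 < pD t w)].
have FC : F t C.
  apply: (Fset (HF tT')); apply: measurable_and.
    by apply: measurable_neg; exact: mDset.
  by apply: measurable_fun_ltr => //; exact: mpD.
have mC := Fmeas tT' FC.
have PC : P C = 0%E.
  apply: KPae => //; first exact: measurable_funTS (mpDO tT).
    by apply: aeT => w /andP[].
  case: (HpD tT) => _ _ ->//.
  rewrite (eq_integral (fun _ => 0%E)) ?integral0 // => w; rewrite inE => /andP[h _].
  suff -> : Dset sigma t.+1 w = false by [].
  by apply/negP => /DsetS; apply/negP.
apply: aeS2 (null_ae mC PC (fun w (h : ~ C w) => h)) (P0 tT) => w h1 h2 h3.
apply: contrapT => h4; apply: h1; apply/andP; split; first by apply/negP.
by rewrite lt_neqAle eq_sym h3 h2.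
Qed.

Lemma Te_D t : (t < T)%N -> {ae P, forall w, (t < Te w)%N -> Dset sigma t w}.
Proof. by move=> tT; apply: aeS (P1 tT) => w h /Teff_pD; exact: h. Qed.

Definition SP s := {ae P, forall w, 0 <= S s w /\ (Dset sigma s w -> 0 < S s w)}.
Definition BP t := {ae P, forall w, 0 <= B t w /\ (0 < pD t w -> 0 < B t w)}.

Lemma SP_T : SP T.
Proof.
by apply: aeT => w; rewrite (HVT w).2; split; [rewrite ler0n|move=> ->; rewrite ltr01].
Qed.

Lemma BP_of t : (t < T)%N -> SP t.+1 -> BP t.
Proof.
move=> tT hS; have tT' := ltnW tT.
have [mBt _ hBi] := HB tT.
have mBO : measurable_fun [set: Omega] (B t) by apply: (toOmega tT'); exact: mB.
have mSO1 := mSO tT.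
have hS0 : {ae P, forall w, 0 <= S t.+1 w} by apply: aeS hS => w [].
have FC1 : F t [set w | B t w < 0].
  by apply: (Fset (HF tT')); apply: measurable_fun_ltr => //; exact: mB.
have mC1 := Fmeas tT' FC1.
have PC1 : P [set w | B t w < 0] = 0%E.
  apply: KPneg => //; [exact: measurable_funTS mBO|by []|].
  rewrite hBi //; apply: AEge0 => //; first exact: measurable_funTS mSO1.
  by apply: aeS hS0 => w h _.
have ae1 : {ae P, forall w, 0 <= B t w}.
  apply: (null_ae mC1 PC1) => w /= h; rewrite leNgt; apply/negP => h'; exact: h.
pose C := [set w | (B t w <= 0) && (0 < pD t w)].
have FC : F t C.
  apply: (Fset (HF tT')); apply: measurable_and.
    by apply: measurable_fun_ler => //; exact: mB.
  by apply: measurable_fun_ltr => //; exact: mpD.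
have mC := Fmeas tT' FC.
have hint : (\int[P]_(w in C) (S t.+1 w)%:E <= 0)%E.
  by rewrite -hBi //; apply: LE0 => w /andP[].
have z := Z0 mC (measurable_funTS mSO1) (aeS (fun w h _ => h) hS0) hint.
have nD : {ae P, forall w, C w -> (Dset sigma t.+1 w)%:R = 0 :> R}.
  apply: aeS2 z hS => w h1 [_ h2] Cw; have := h1 Cw.
  by case: (Dset sigma t.+1 w) h2 => // /(_ isT) h3 h4; move: h3; rewrite h4 ltxx.
have PC : P C = 0%E.
  apply: KPae => //; first exact: measurable_funTS (mpDO tT).
    by apply: aeT => w /andP[].
  case: (HpD tT) => _ _ ->//.
  rewrite (ae_eq_integral (fun _ => 0%E)) ?integral0 //.
  - by apply/measurable_EFinP; exact: measurable_funTS (mDO tT).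
  - by apply: aeS nD => w h Cw; rewrite /= h.
apply: aeS2 (null_ae mC PC (fun w (h : ~ C w) => h)) ae1 => w h1 h2.
split => // h3; rewrite lt_neqAle h2 andbT eq_sym; apply/negP => /eqP h4.
by apply: h1; rewrite /C /= h4 lexx h3.
Qed.

Lemma SP_of t : (t < T)%N -> BP t -> SP t.
Proof.
move=> tT hB; apply: aeS2 hB (P0 tT) => w [h1 h2] h3.
rewrite (SE w tT); case: ifP => hT.
  have h4 : 0 < pD t w by rewrite lt_neqAle eq_sym (Teff_pD hT) h3.
  by case: ifP => _; [rewrite ler01 ltr01|split => // _; exact: h2 h4].
by split; [rewrite ler0n|move=> ->; rewrite ltr01].
Qed.

Lemma SP_all t : (t <= T)%N -> SP t.
Proof.
move: {2}(T - t)%N (erefl (T - t)%N) => n.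
elim: n t => [|n IH] t hn tT.
  by rewrite (_ : t = T); [exact: SP_T|lia].
have tT' : (t < T)%N by lia.
by apply: SP_of => //; apply: BP_of => //; apply: IH => //; lia.
Qed.

Lemma Bpos t : (t < T)%N -> {ae P, forall w, (t < Te w)%N -> 0 < B t w}.
Proof.
move=> tT; apply: aeS2 (BP_of tT (SP_all tT)) (P0 tT) => w [_ h] h0 hT.
by apply: h; rewrite lt_neqAle eq_sym (Teff_pD hT) h0.
Qed.

Lemma mthetaO u : (u <= T)%N -> measurable_fun [set: Omega] (theta u).
Proof. by move=> uT; apply: (toOmega uT); exact: mtheta. Qed.

Lemma mXth t : (t <= T)%N ->
  measurable_fun [set: Omega] (Xg theta t) /\ measurable_fun [set: Omega] (Xi theta t).
Proof. by apply: mX => u uT; exact: mthetaO. Qed.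

Lemma mAO t : (t < T)%N -> measurable_fun [set: Omega] (A t).
Proof. by move=> tT; apply: (toOmega (ltnW tT)); exact: mA. Qed.

Lemma mBO t : (t < T)%N -> measurable_fun [set: Omega] (B t).
Proof. by move=> tT; apply: (toOmega (ltnW tT)); exact: mB. Qed.

Definition INV t := forall C, F t.+1 C ->
  (\int[P]_(w in C) (S t.+1 w * V t.+1 w)%:E = \int[P]_(w in C) (Xg theta t w)%:E)%E /\
  (\int[P]_(w in C) (S t.+1 w)%:E = \int[P]_(w in C) (Xi theta t w)%:E)%E.

Lemma INV_base t : t.+1 = T -> INV t.
Proof.
move=> e C FC.
have tT : (t < T)%N by rewrite -e.
have Ht : forall w, theta t.+1 w by rewrite e; exact: thetaT.
split; apply: eq_integral => w _; have := HVT w; rewrite -e.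
  by move=> -[-> ->]; rewrite Xg_rec // Ht mulrC.
by move=> -[_ ->]; rewrite /Xi Lnext_rec // Ht.
Qed.

Lemma INV_step t : (t.+1 < T)%N -> INV t.+1 -> INV t.
Proof.
move=> sT IH C FC.
have sT' := ltnW sT.
have tT : (t < T)%N by lia.
pose E := [set w | theta t.+1 w].
have FE : F t.+1 E by apply: (Fset (HF sT')); exact: mtheta.
have mE := Fmeas sT' FE.
have mC := Fmeas sT' FC.
have mCE : measurable (C `&` E) by exact: measurableI.
have FC2 : F t.+1 (C `&` ~` E) by exact: FsetIC.
have mC2 := Fmeas sT' FC2.
have FC2' : F t.+2 (C `&` ~` E) by apply: (@Hmono t.+1); [rewrite sT andbT|].
have [mXg mXi] := mXth (ltnW tT).
have [mXg1 mXi1] := mXth sT'.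
have mY := mYO sT'.
have mS := mSO sT'.
have mAs := mAO sT.
have mBs := mBO sT.
have hD := Te_D sT.
have hB := Bpos sT.
have [_ _ hA] := HA sT.
have [_ _ hBi] := HB sT.
have EF (f : Omega -> R) : measurable_fun setT f -> measurable_fun (C `&` ~` E) (EFin \o f).
  by move=> mf; apply/measurable_EFinP; exact: measurable_funTS.
have EF1 (f : Omega -> R) : measurable_fun setT f -> measurable_fun (C `&` E) (EFin \o f).
  by move=> mf; apply/measurable_EFinP; exact: measurable_funTS.
split.
- apply: (@SPLIT _ _ _ P C E (fun w => S t.+1 w * V t.+1 w) (Xg theta t) mC mE mY mXg).
  + apply: ae_eq_integral => //; [exact: EF1|exact: EF1|].
    apply: aeS hD => w hw [_ Ew]; rewrite /= Xg_rec // Ew YE //.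
    move: Ew; rewrite /E /= thetaE //.
    case: ifP => hT; last by rewrite mulrC.
    by move=> ->; rewrite (hw hT) mulr1.
  + transitivity (\int[P]_(w in C `&` ~` E) (A t.+1 w)%:E)%E.
      apply: ae_eq_integral => //; [exact: EF|exact: EF|].
      apply: aeS hB => w hw [_ Ew]; move: Ew; rewrite /E /= thetaE // YE //.
      case: ifP => hT // /negP /negbTE ->.
      by have := hw hT; rewrite lt_neqAle eq_sym => /andP[/negbTE ->].
    rewrite hA // (IH _ FC2').1.
    apply: eq_integral => w; rewrite inE => -[_ Ew].
    by apply/esym; rewrite Xg_rec //; move/negP/negbTE : Ew => ->.
- apply: (@SPLIT _ _ _ P C E (S t.+1) (Xi theta t) mC mE mS mXi).
  + apply: ae_eq_integral => //; [exact: EF1|exact: EF1|].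
    apply: aeS hD => w hw [_ Ew]; rewrite /= Xi_rec // Ew SE //.
    move: Ew; rewrite /E /= thetaE //.
    case: ifP => hT // ->.
    by rewrite (hw hT).
  + transitivity (\int[P]_(w in C `&` ~` E) (B t.+1 w)%:E)%E.
      apply: eq_integral => w; rewrite inE => -[_ Ew].
      move: Ew; rewrite /E /= thetaE // SE //.
      by case: ifP => hT // /negP /negbTE ->.
    rewrite hBi // (IH _ FC2').2.
    apply: eq_integral => w; rewrite inE => -[_ Ew].
    by apply/esym; rewrite Xi_rec //; move/negP/negbTE : Ew => ->.
Qed.

Lemma INV_all t : (t < T)%N -> INV t.
Proof.
move: {2}(T - t)%N (erefl (T - t)%N) => n.
elim: n t => [|n IH] t hn tT; first by lia.
have [e|lt] := eqVneq t.+1 T; first exact: INV_base.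
apply: INV_step; first lia.
apply: IH; lia.
Qed.

Lemma Jeq t : (t < T)%N -> forall C, F t C ->
  (\int[P]_(w in C) (A t w)%:E = \int[P]_(w in C) (Xg theta t w)%:E)%E /\
  (\int[P]_(w in C) (B t w)%:E = \int[P]_(w in C) (Xi theta t w)%:E)%E.
Proof.
move=> tT C FC.
have FC' : F t.+1 C by apply: (@Hmono t); [rewrite leqnSn tT|].
have [_ _ ->] := HA tT; last by [].
have [_ _ ->] := HB tT; last by [].
exact: INV_all.
Qed.

Lemma adm_theta : admissible P T F sigma Te theta.
Proof.
split.
  by move=> t tT; apply: (Fset (HF tT)); exact: mtheta.
move=> t; rewrite leq_eqVlt => /orP[/eqP ->|tT].
  split; first by move=> q _; apply: aeT => w; rewrite ltnNge Teff_le.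
  by apply: aeT => w _; exact: thetaT.
split; last first.
  by apply: aeT => w; rewrite thetaE // leqNgt => /negbTE ->.
move=> q [mq iq hq].
have [mBt iBt _] := HB tT.
have e : {ae P, forall w, q w = B t w}.
  apply: (ce_unique (HF (ltnW tT)) (HFm (ltnW tT))) => // C FC.
  by rewrite hq // (Jeq tT FC).2.
by apply: aeS2 e (Bpos tT) => w -> h.
Qed.

Lemma eq_theta : equilibrium_pes P T F sigma G Te theta.
Proof.
split; first exact: adm_theta.
move=> t; rewrite leq_eqVlt => /orP[/eqP ->|tT] num den [mn iN hn] [md iD hd].
  by apply: aeT => w; rewrite ltnNge Teff_le.
have [mAt iAt _] := HA tT.
have [mBt iBt _] := HB tT.
have e1 : {ae P, forall w, num w = A t w}.
  apply: (ce_unique (HF (ltnW tT)) (HFm (ltnW tT))) => // C FC.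
  by rewrite hn // (Jeq tT FC).1.
have e2 : {ae P, forall w, den w = B t w}.
  apply: (ce_unique (HF (ltnW tT)) (HFm (ltnW tT))) => // C FC.
  by rewrite hd // (Jeq tT FC).2.
by apply: aeS2 e1 e2 => w -> -> hT; rewrite thetaE // hT.
Qed.

Lemma uniq_theta (th : nat -> Omega -> bool) :
  equilibrium_pes P T F sigma G Te th ->
  forall t, (t <= T)%N -> {ae P, forall w, th t w = theta t w}.
Proof.
move=> [[hadF hadq] heq].
have mth : forall u, (u <= T)%N -> measurable_fun [set: Omega] (th u).
  move=> u uT; apply: (measurable_fun_bool true); rewrite setTI.
  exact: (HFm uT (hadF u uT)).
have hT : {ae P, forall w, th T w}.
  by apply: aeS (hadq T (leqnn T)).2 => w; apply; exact: Teff_le.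
have U : forall t, (t <= T)%N ->
    {ae P, forall w, forall u, (t <= u <= T)%N -> th u w = theta u w}.
  move=> t; move: {2}(T - t)%N (erefl (T - t)%N) => n.
  elim: n t => [|n IH] t hn tT.
    apply: aeS hT => w h u hu; have -> : u = T by lia.
    by rewrite h thetaT.
  have tT' : (t < T)%N by lia.
  have Ht1 := IH t.+1 ltac:(lia) tT'.
  have hL : {ae P, forall w, Xg th t w = Xg theta t w /\ Xi th t w = Xi theta t w}.
    apply: aeS Ht1 => w h.
    by rewrite /Xg /Xi (@eq_Lnext _ _ T th theta t w) // => u hu; apply: h; lia.
  have [mX1 mX2] := mX mth (ltnW tT').
  have [mX3 mX4] := mXth (ltnW tT').
  have hcA : cond_exp P (F t) (Xg th t) (A t).
    have [mAt iAt _] := HA tT'; split => // C FC.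
    have mC := Fmeas (ltnW tT') FC.
    rewrite (Jeq tT' FC).1; apply: ae_eq_integral => //.
    - by apply/measurable_EFinP; exact: measurable_funTS.
    - by apply/measurable_EFinP; exact: measurable_funTS.
    - by apply: aeS hL => w [h _] _; rewrite /= h.
  have hcB : cond_exp P (F t) (Xi th t) (B t).
    have [mBt iBt _] := HB tT'; split => // C FC.
    have mC := Fmeas (ltnW tT') FC.
    rewrite (Jeq tT' FC).2; apply: ae_eq_integral => //.
    - by apply/measurable_EFinP; exact: measurable_funTS.
    - by apply/measurable_EFinP; exact: measurable_funTS.
    - by apply: aeS hL => w [_ h] _; rewrite /= h.
  have h1 := heq t (ltnW tT') (A t) (B t) hcA hcB.
  have h2 := (hadq t (ltnW tT')).2.
  apply: aeS3 h1 h2 Ht1 => w a b c u hu.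
  have [->|ne] := eqVneq u t; last by apply: c; lia.
  rewrite thetaE //; case: ifP => hTe; first exact: a.
  by apply: b; rewrite leqNgt hTe.
by move=> t tT; apply: aeS (U t tT) => w h; apply: h; rewrite leqnn tT.
Qed.

End main.

Unset Implicit Arguments.
Set Strict Implicit.

Theorem theorem3p1 (d : measure_display) (Omega : measurableType d)
  (R : realType) (P : probability Omega R) (T : nat)
  (F : nat -> set (set Omega)) (sigma : Omega -> option nat)
  (G : nat -> Omega -> R)
  (pD A B V S : nat -> Omega -> R) :
  standing P T F sigma G ->
  (* pD t is a version of P(D_{t+1} | F_t) *)
  (forall t, (t < T)%N ->
     cond_exp P (F t) (fun w => (Dset sigma t.+1 w)%:R) (pD t)) ->
  (* A t, B t are versions of E[S_{t+1} V_{t+1} | F_t], E[S_{t+1} | F_t] *)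
  (forall t, (t < T)%N ->
     cond_exp P (F t) (fun w => S t.+1 w * V t.+1 w) (A t)) ->
  (forall t, (t < T)%N -> cond_exp P (F t) (S t.+1) (B t)) ->
  (* backward recursion, with J_t = A t / B t on {t < T_e} *)
  (forall w, V T w = G T w /\ S T w = (Dset sigma T w)%:R) ->
  (forall t w, (t < T)%N ->
     if (t < Teff T pD w)%N then
       (if A t w / B t w <= G t w
        then V t w = G t w /\ S t w = 1
        else V t w = A t w / B t w /\ S t w = B t w)
     else V t w = G t w /\ S t w = (Dset sigma t w)%:R) ->
  let theta := fun t w => V t w <= G t w in
  equilibrium_pes P T F sigma G (Teff T pD) theta /\
  (forall theta' : nat -> Omega -> bool,
     equilibrium_pes P T F sigma G (Teff T pD) theta' ->
     forall t, (t <= T)%N -> {ae P, forall w, theta' t w = theta t w}).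
Proof.
move=> Hst HpD HA HB HVT Hrec theta.
split.
- exact: (eq_theta Hst HpD HA HB HVT Hrec).
- move=> th' h t tT; exact: (uniq_theta Hst HpD HA HB HVT Hrec h tT).
Qed.
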